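(* Consider the ARLOD model on a finite connected graph $G$ with $N\ge 2$ agents, learning rate $\alpha\in(0,1)$, exploration rate $\epsilon\in(0,1)$, and any initial Q-values in $[-1,1]$. Then $$\mathbb{P}\big(\exists\, t_0<\infty,\ \exists\, o\in\{-1,1\}: Q^i_o(t)>Q^i_{-o}(t)\ \ \forall i\in\{1,\dots,N\},\ \forall t\ge t_0\big)=1,$$ i.e. almost surely the system eventually reaches consensus and remains in it forever.
   Context: The ARLOD (asymmetric reinforcement learning for opinion dynamics) model: $G=(V,E)$ is a finite simple undirected graph on vertex set $V=\{1,\dots,N\}$ (agents); $N(i)=\{u:(u,i)\in E\}$ is the neighbourhood of $i$. Each agent $i$ holds two Q-values $Q^i_{1}(t),Q^i_{-1}(t)\in\mathbb{R}$, initialized in $[-1,1]$. The favoured opinion of agent $i$ at time $t$ is $1$ if $Q^i_1(t)\ge Q^i_{-1}(t)$ and $-1$ otherwise. In each discrete round $t$: an agent $i$ is chosen uniformly at random from $V$; $i$ chooses a neighbour $j\in N(i)$ uniformly at random; $i$ expresses an opinion $o_i(t)$, equal to its favoured opinion with probability $1-\epsilon$ and to the other opinion with probability $\epsilon$; $j$ responds with $R_j=1$ if $o_i(t)$ equals $j$'s favoured opinion and $R_j=-1$ otherwise; then only agent $i$ updates, via $Q^i_{o_i(t)}(t+1)=(1-\alpha)Q^i_{o_i(t)}(t)+\alpha R_j$ and $Q^i_{-o_i(t)}(t+1)=Q^i_{-o_i(t)}(t)$. All other agents' Q-values are unchanged in that round. *)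

(* Defs.v *)
From HB Require Import structures.
From mathcomp Require Import all_boot all_order all_algebra.
From mathcomp Require Import all_classical all_reals all_analysis.
Set Implicit Arguments. Unset Strict Implicit. Unset Printing Implicit Defensive.
Import Order.TTheory GRing.Theory Num.Theory.
Local Open Scope ring_scope.

(* Opinions: true = opinion 1,
   false = opinion -1.  A Q-table is a function agent -> opinion -> R.
   The random input of round t is the triple (i, j, b): i the chosen agent,
   j the chosen neighbour, b = true iff i explores (expresses the
   non-favoured opinion). *)

Definition arlod_input (N : nat) := ('I_N * 'I_N * bool)%type.

Definition favoured (R : realType) (N : nat) (Q : 'I_N -> bool -> R) (i : 'I_N)
  : bool := Q i false <= Q i true.

Definition arlod_update (R : realType) (N : nat) (alpha : R)
  (Q : 'I_N -> bool -> R) (x : arlod_input N) : 'I_N -> bool -> R :=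
  let: (i, j, b) := x in
  let o := if b then ~~ favoured Q i else favoured Q i in
  let r : R := if o == favoured Q j then 1 else -1 in
  fun k p => if (k == i) && (p == o) then (1 - alpha) * Q k p + alpha * r
             else Q k p.

Fixpoint arlod_Q (R : realType) (N : nat) (alpha : R) (Q0 : 'I_N -> bool -> R)
  (xs : nat -> arlod_input N) (t : nat) : 'I_N -> bool -> R :=
  match t with
  | 0 => Q0
  | t'.+1 => arlod_update alpha (arlod_Q alpha Q0 xs t') (xs t')
  end.

Definition arlod_input_prob (R : realType) (N : nat) (adj : rel 'I_N) (eps : R)
  (x : arlod_input N) : R :=
  let: (i, j, b) := x in
  N%:R^-1 * (if adj i j then (#|[set k | adj i k]|%:R)^-1 else 0)
  * (if b then eps else 1 - eps).

(* Main.v *)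
Require Import Defs.
From HB Require Import structures.
From mathcomp Require Import all_boot all_order all_algebra.
From mathcomp Require Import all_classical all_reals all_analysis.
From mathcomp Require Import zify ring lra.
Import Order.TTheory GRing.Theory Num.Theory.
Local Open Scope classical_set_scope.
Local Open Scope ring_scope.


Definition bnd {R : realType} {N : nat} (Q : 'I_N -> bool -> R) :=
  forall i o, -1 <= Q i o <= 1.

Definition consb {R : realType} {N : nat} (Q : 'I_N -> bool -> R) : bool :=
  [exists o, [forall i, Q i (~~ o) < Q i o]].

Lemma update_bnd {R : realType} {N : nat} (alpha : R) (Q : 'I_N -> bool -> R) x :
  0 < alpha < 1 -> bnd Q -> bnd (arlod_update alpha Q x).
Proof.
case: x => [[i j] b] /andP[a0 a1] hb k p /=.
case: ifP => _; last exact: hb.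
have /andP[h1 h2] := hb k p.
case: ifP => _; apply/andP; split; nra.
Qed.

Lemma Q_bnd {R : realType} {N : nat} (alpha : R) (Q0 : 'I_N -> bool -> R) xs t :
  0 < alpha < 1 -> bnd Q0 -> bnd (arlod_Q alpha Q0 xs t).
Proof.
move=> ha hb; elim: t => [|t IH] //=; exact: update_bnd.
Qed.

Lemma cons_update {R : realType} {N : nat} (alpha : R) (Q : 'I_N -> bool -> R) x :
  0 < alpha < 1 -> bnd Q -> consb Q -> consb (arlod_update alpha Q x).
Proof.
case: x => [[i j] b] /andP[a0 a1] hb /existsP[] o /forallP H.
have fav : forall k, favoured Q k = o.
  move=> k; rewrite /favoured; have := H k; case: o {H} => /= h.
    exact: ltW.
  by rewrite leNgt h.
apply/existsP; exists o; apply/forallP => k /=.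
rewrite !fav.
have hk := H k; have /andP[h1 h2] := hb k o; have /andP[h3 h4] := hb k (~~ o).
clear fav H.
case: b; case: o hk h1 h2 h3 h4 => hk h1 h2 h3 h4;
  case: (k == i) => /=; nra.
Qed.

Lemma Q_ext {R : realType} {N : nat} (alpha : R) (Q0 : 'I_N -> bool -> R) xs ys t :
  (forall s, (s < t)%N -> xs s = ys s) ->
  arlod_Q alpha Q0 xs t = arlod_Q alpha Q0 ys t.
Proof.
elim: t => [|t IH] //= H.
rewrite IH ?H // => s hs; apply: H; exact: ltnW.
Qed.

Lemma Q_shift {R : realType} {N : nat} (alpha : R) (Q0 : 'I_N -> bool -> R) xs m k :
  arlod_Q alpha Q0 xs (m + k) =
  arlod_Q alpha (arlod_Q alpha Q0 xs m) (fun j => xs (m + j)) k.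
Proof. by elim: k => [|k IH]; rewrite ?addn0 // addnS /= IH. Qed.


Definition Reach {R : realType} {N : nat} (adj : rel 'I_N) (alpha : R)
  (Q : 'I_N -> bool -> R) (k : nat) (P : ('I_N -> bool -> R) -> Prop) :=
  exists s : nat -> arlod_input N,
    (forall t, (t < k)%N -> adj (s t).1.1 (s t).1.2) /\ P (arlod_Q alpha Q s k).

Lemma Reach_trans {R : realType} {N : nat} {adj : rel 'I_N} {alpha : R} {Q k1 k2 P1 P2} :
  Reach adj alpha Q k1 P1 -> (forall Q1, P1 Q1 -> Reach adj alpha Q1 k2 P2) ->
  Reach adj alpha Q (k1 + k2) P2.
Proof.
move=> [s1 [v1 p1]] /(_ _ p1) [s2 [v2 p2]].
exists (fun t => if (t < k1)%N then s1 t else s2 (t - k1)%N); split.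
  move=> t ht; case: ifP => h; first exact: v1.
  apply: v2; lia.
rewrite Q_shift (@Q_ext _ _ alpha Q _ s1 k1); last by move=> s hs; rewrite hs.
rewrite (@Q_ext _ _ _ _ _ s2) // => s hs.
have -> : (k1 + s < k1)%N = false by lia.
by rewrite addKn.
Qed.

Lemma Reach_step {R : realType} {N : nat} {adj : rel 'I_N} {alpha : R} {Q} x
  {P : ('I_N -> bool -> R) -> Prop} :
  adj x.1.1 x.1.2 -> P (arlod_update alpha Q x) -> Reach adj alpha Q 1 P.
Proof. by move=> hx hP; exists (fun _ => x); split. Qed.

Lemma Reach0 {R : realType} {N : nat} {adj : rel 'I_N} {alpha : R} {Q}
  {P : ('I_N -> bool -> R) -> Prop} (x0 : arlod_input N) :
  P Q -> Reach adj alpha Q 0 P.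
Proof. by move=> hP; exists (fun _ => x0); split. Qed.

Lemma Reach_mono {R : realType} {N : nat} {adj : rel 'I_N} {alpha : R} {Q k}
  {P P' : ('I_N -> bool -> R) -> Prop} :
  (forall Q', P Q' -> P' Q') -> Reach adj alpha Q k P -> Reach adj alpha Q k P'.
Proof. by move=> H [s [v p]]; exists s; split => //; apply: H. Qed.

Lemma Reach_bnd {R : realType} {N : nat} {adj : rel 'I_N} {alpha : R} {Q k}
  {P : ('I_N -> bool -> R) -> Prop} :
  0 < alpha < 1 -> bnd Q ->
  Reach adj alpha Q k P -> Reach adj alpha Q k (fun Q' => P Q' /\ bnd Q').
Proof. by move=> ha hb [s [v p]]; exists s; split => //; split => //; apply: Q_bnd. Qed.

Lemma stepT {R : realType} {N : nat} (alpha : R) (Q : 'I_N -> bool -> R) k j :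
  k != j -> favoured Q j ->
  arlod_update alpha Q (k, j, ~~ favoured Q k) k true = (1 - alpha) * Q k true + alpha
  /\ forall a p, (a != k) || (p != true) ->
     arlod_update alpha Q (k, j, ~~ favoured Q k) a p = Q a p.
Proof.
move=> hkj hj /=; rewrite hj.
have -> : (if ~~ favoured Q k then ~~ favoured Q k else favoured Q k) = true.
  by case: (favoured Q k).
rewrite eqxx /=; split; first by rewrite mulr1.
by move=> a p /orP[] h; case: ifP => // /andP[/eqP ha /eqP hp]; rewrite ?ha ?hp eqxx in h.
Qed.

Lemma stepF {R : realType} {N : nat} (alpha : R) (Q : 'I_N -> bool -> R) k j :
  k != j -> favoured Q j ->
  arlod_update alpha Q (k, j, favoured Q k) k false = (1 - alpha) * Q k false - alpha
  /\ forall a p, (a != k) || (p != false) ->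
     arlod_update alpha Q (k, j, favoured Q k) a p = Q a p.
Proof.
move=> hkj hj /=; rewrite hj.
have -> : (if favoured Q k then ~~ favoured Q k else favoured Q k) = false.
  by case: (favoured Q k).
rewrite eqxx /=; split; first by rewrite mulrN1.
by move=> a p /orP[] h; case: ifP => // /andP[/eqP ha /eqP hp]; rewrite ?ha ?hp eqxx in h.
Qed.


Lemma fav_eq {R : realType} {N : nat} (Q Q' : 'I_N -> bool -> R) j :
  Q' j false = Q j false -> Q' j true = Q j true -> favoured Q' j = favoured Q j.
Proof. by rewrite /favoured => -> ->. Qed.

Lemma pushT {R : realType} {N : nat} (adj : rel 'I_N) (alpha : R) Q k j m :
  adj k j -> k != j -> favoured Q j ->
  Reach adj alpha Q m (fun Q' => Q' k true = 1 - (1 - alpha) ^+ m * (1 - Q k true)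
     /\ forall a p, (a != k) || (p != true) -> Q' a p = Q a p).
Proof.
move=> hadj hkj hj; elim: m => [|m IH].
  apply: (Reach0 (k, j, false)); split; first by rewrite expr0 mul1r; ring.
  by [].
rewrite -addn1; apply: (Reach_trans IH) => Q1 [h1 h2].
have hj1 : favoured Q1 j.
  by rewrite (fav_eq Q) // h2 // eq_sym hkj.
apply: (Reach_step ((k, j, ~~ favoured Q1 k))) => //.
have [e1 e2] := stepT alpha Q1 k j hkj hj1; split.
  by rewrite e1 h1 addn1 exprS; ring.
by move=> a p hap; rewrite e2 // h2.
Qed.

Lemma pushF {R : realType} {N : nat} (adj : rel 'I_N) (alpha : R) Q k j m :
  adj k j -> k != j -> favoured Q j ->
  Reach adj alpha Q m (fun Q' => Q' k false = -1 + (1 - alpha) ^+ m * (1 + Q k false)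
     /\ forall a p, (a != k) || (p != false) -> Q' a p = Q a p).
Proof.
move=> hadj hkj hj; elim: m => [|m IH].
  apply: (Reach0 (k, j, false)); split; first by rewrite expr0 mul1r; ring.
  by [].
rewrite -addn1; apply: (Reach_trans IH) => Q1 [h1 h2].
have hj1 : favoured Q1 j.
  by rewrite (fav_eq Q) // h2 // eq_sym hkj.
apply: (Reach_step ((k, j, favoured Q1 k))) => //.
have [e1 e2] := stepF alpha Q1 k j hkj hj1; split.
  by rewrite e1 h1 addn1 exprS; ring.
by move=> a p hap; rewrite e2 // h2.
Qed.

Lemma push {R : realType} {N : nat} (adj : rel 'I_N) (alpha : R) Q k j m :
  0 < alpha < 1 -> bnd Q -> 2 * (1 - alpha) ^+ m < 1 ->
  adj k j -> k != j -> favoured Q j ->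
  Reach adj alpha Q (m + m) (fun Q' => Q' k false < Q' k true
     /\ forall a, a != k -> forall p, Q' a p = Q a p).
Proof.
move=> /andP[a0 a1] hb hm hadj hkj hj.
apply: (Reach_trans (pushT adj alpha Q k j m hadj hkj hj)) => Q1 [h1 h2].
have hj1 : favoured Q1 j.
  by rewrite (fav_eq Q) // h2 // eq_sym hkj.
apply: (Reach_mono _ (pushF adj alpha Q1 k j m hadj hkj hj1)) => Q2 [e1 e2]; split.
  rewrite e1 e2 ?orbT // h1 h2 ?orbT //.
  have /andP[b1 b2] := hb k true; have /andP[b3 b4] := hb k false.
  have r0 : 0 <= (1 - alpha) ^+ m by apply: exprn_ge0; lra.
  nra.
by move=> a ha p; rewrite e2 ?ha // h2 ?ha.
Qed.


Lemma cross {N : nat} (adj : rel 'I_N) (p : pred 'I_N) a b :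
  connect adj a b -> p a -> ~~ p b -> exists x y, [/\ adj x y, p x & ~~ p y].
Proof.
move=> /connectP [s hs ->] {b}.
elim: s a hs => [|y s IH] a /=; first by move=> _ ->.
move=> /andP[hay hs] pa npl.
case: (boolP (p y)) => py; first exact: IH hs py npl.
by exists a, y.
Qed.

Lemma exists_other {N : nat} (k : 'I_N) : (2 <= N)%N -> exists b : 'I_N, b != k.
Proof.
move=> hN; have h0 : (0 < N)%N by lia.
have h1 : (1 < N)%N by lia.
case: k => kk hkk; case: (eqVneq kk 0%N) => hk.
  by exists (Ordinal h1); apply/eqP => /(congr1 val) /=; lia.
by exists (Ordinal h0); apply/eqP => /(congr1 val) /=; move/eqP: hk; lia.
Qed.

Lemma nbr {N : nat} (adj : rel 'I_N) :
  (forall i j, connect adj i j) -> (2 <= N)%N -> forall k, exists j, adj k j.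
Proof.
move=> con hN k; have [b hb] := exists_other k hN.
have hb' : ~~ pred1 k b by rewrite /= hb.
have [x [y [hxy /eqP hx hy]]] := @cross _ adj (pred1 k) k b (con k b) (eqxx k) hb'.
by exists y; rewrite -hx.
Qed.

Lemma Reach_pad {R : realType} {N : nat} (adj : rel 'I_N) (alpha : R) (x0 : arlod_input N) d Q :
  adj x0.1.1 x0.1.2 -> 0 < alpha < 1 -> consb Q -> bnd Q ->
  Reach adj alpha Q d (fun Q' => consb Q' /\ bnd Q').
Proof.
move=> hx0 ha; elim: d Q => [|d IH] Q hc hb; first by apply: (Reach0 x0).
rewrite -add1n.
have hs : Reach adj alpha Q 1 (fun Q' => consb Q' /\ bnd Q').
  apply: (Reach_step x0 hx0).
  by split; [apply: cons_update | apply: update_bnd].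
apply: (Reach_trans hs) => Q1 [h1 h2].
exact: IH.
Qed.

Lemma spread {R : realType} {N : nat} (adj : rel 'I_N) (alpha : R) m (x0 : arlod_input N) :
  adj x0.1.1 x0.1.2 ->
  0 < alpha < 1 -> 2 * (1 - alpha) ^+ m < 1 -> irreflexive adj ->
  (forall i j, connect adj i j) -> (2 <= N)%N ->
  forall (n : nat) (Q : 'I_N -> bool -> R), bnd Q -> (exists a, favoured Q a) ->
  (#|[pred a | ~~ (Q a false < Q a true)%R]| <= n)%N ->
  Reach adj alpha Q (n * (m + m)) (fun Q' => consb Q').
Proof.
move=> hx0 ha hm irr con hN n; elim: n => [|n IH] Q hb [a0 fa0] hc.
  case: (boolP [forall a, Q a false < Q a true]) => [/forallP hall|/forallPn [k0 hk0]].
    apply: (Reach_mono _ (Reach_pad adj alpha x0 _ Q hx0 ha _ hb)) => [Q' []//|].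
    by apply/existsP; exists true; apply/forallP.
  move: hc; rewrite leqn0 => /eqP /card0_eq HB.
  by have := HB k0; rewrite !inE hk0.
case: (boolP [forall a, Q a false < Q a true]) => [/forallP hall|/forallPn [k0 hk0]].
  apply: (Reach_mono _ (Reach_pad adj alpha x0 _ Q hx0 ha _ hb)) => [Q' []//|].
  by apply/existsP; exists true; apply/forallP.
have [k [j [hkj hk hj]]] : exists k j, [/\ adj k j, ~~ (Q k false < Q k true) & favoured Q j].
  case: (boolP [forall a, favoured Q a]) => [/forallP hall | /forallPn [b hb']].
    by have [j hj] := nbr adj con hN k0; exists k0, j; split.
  have fa0' : ~~ ~~ favoured Q a0 by rewrite fa0.
  have [x [y [hxy px py]]] :=
    @cross _ adj (fun a => ~~ favoured Q a) b a0 (con b a0) hb' fa0'.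
  exists x, y; split => //; last by rewrite negbK in py.
  apply/negP => hs; move: px; rewrite /favoured (ltW hs).
  by [].
have hkj' : k != j by apply/eqP => e; rewrite e irr in hkj.
rewrite mulSn.
apply: (Reach_trans (Reach_bnd ha hb (push adj alpha Q k j m ha hb hm hkj hkj' hj))).
move=> Q1 [[hs hoth] hb1].
apply: IH => //; first by exists k; rewrite /favoured ltW.
rewrite -ltnS; apply: leq_trans hc; apply: proper_card.
apply/properP; split.
  apply/fintype.subsetP => a; rewrite !inE; case: (eqVneq a k) => [->|hak]; first by rewrite hs.
  by rewrite !hoth.
by exists k; rewrite !inE // hs.
Qed.

Lemma Reach_cons {R : realType} {N : nat} (adj : rel 'I_N) (alpha : R) m (x0 : arlod_input N) Q :
  adj x0.1.1 x0.1.2 ->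
  0 < alpha < 1 -> 2 * (1 - alpha) ^+ m < 1 -> irreflexive adj ->
  (forall i j, connect adj i j) -> (2 <= N)%N -> bnd Q ->
  Reach adj alpha Q (N * (m + m)) (fun Q' => consb Q').
Proof.
move=> hx0 ha hm irr con hN hb.
case: (boolP [exists a, favoured Q a]) => [/existsP hf | /existsPn hf].
  apply: (spread adj alpha m x0 hx0 ha hm irr con hN N Q hb hf).
  by apply: leq_trans (max_card _) _; rewrite card_ord.
apply: (Reach_mono _ (Reach_pad adj alpha x0 _ Q hx0 ha _ hb)) => [Q' []//|].
apply/existsP; exists false; apply/forallP => i /=.
by have := hf i; rewrite /favoured -ltNge.
Qed.

Lemma geom {R : realType} (r e : R) : 0 <= r < 1 -> 0 < e -> exists n, r ^+ n < e.
Proof.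
move=> /andP[r0 r1] e0.
case: (eqVneq r 0) => [->|rn0]; first by exists 1%N; rewrite expr1.
have rp : 0 < r by rewrite lt_def rn0.
set b := r^-1 - 1.
have hrb : r * (1 + b) = 1 by rewrite /b addrC subrK mulfV.
have bp : 0 < b.
  rewrite /b subr_gt0 -[ltLHS]invr1 ltf_pV2 ?posrE //.
have bern : forall n, 1 + n%:R * b <= (1 + b) ^+ n.
  elim => [|n IHn]; first by rewrite mul0r addr0 expr0.
  rewrite exprS -addn1 natrD.
  have : 0 <= n%:R :> R by apply: ler0n.
  nra.
set c := (e * b)^-1.
have c1 : c * (e * b) = 1 by rewrite /c mulVf // gt_eqF // mulr_gt0.
have c0 : 0 <= c by rewrite /c invr_ge0 ltW // mulr_gt0.
have [n hn] : exists n : nat, c < n%:R by exists (Num.Def.archi_bound c); exact: archi_boundP.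
exists n.
have h1 : r ^+ n * (1 + b) ^+ n = 1 by rewrite -exprMn hrb expr1n.
have h2 := bern n.
have h3 : 0 <= r ^+ n by apply: exprn_ge0.
have h4 : 0 <= n%:R :> R by apply: ler0n.
have h5 : r ^+ n * (1 + n%:R * b) <= 1.
  by apply: le_trans (ler_wpM2l h3 h2) _; rewrite h1.
have eb : 0 < e * b by apply: mulr_gt0.
have h6 : 1 < n%:R * (e * b) by nra.
rewrite ltNge; apply/negP => h7.
have hnb : 0 <= 1 + n%:R * b by nra.
have : e * (1 + n%:R * b) <= r ^+ n * (1 + n%:R * b) by apply: ler_wpM2r.
nra.
Qed.


Definition hist {T : Type} {N : nat} (X : nat -> T -> arlod_input N) (n : nat) (w : T)
  : {ffun 'I_n -> arlod_input N} := [ffun i : 'I_n => X i w].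

Definition ext {N n : nat} (x0 : arlod_input N) (h : {ffun 'I_n -> arlod_input N})
  (t : nat) : arlod_input N := oapp h x0 (insub t).

Lemma ext_ord {N n : nat} (x0 : arlod_input N) (h : {ffun 'I_n -> arlod_input N}) (i : 'I_n) :
  ext x0 h i = h i.
Proof. by rewrite /ext valK. Qed.

Lemma ext_lt {N n : nat} (x0 : arlod_input N) (h : {ffun 'I_n -> arlod_input N}) t
  (ht : (t < n)%N) : ext x0 h t = h (Ordinal ht).
Proof. exact: (ext_ord x0 h (Ordinal ht)). Qed.

Lemma hist_eqE {T : Type} {N : nat} (X : nat -> T -> arlod_input N) n w h x0 :
  hist X n w = h <-> forall t, (t < n)%N -> X t w = ext x0 h t.
Proof.
split.
  by move=> <- t ht; rewrite (ext_lt _ _ _ ht) ffunE.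
by move=> H; apply/ffunP => i; rewrite ffunE H // ext_ord.
Qed.

Lemma bigU_mem {T : Type} {I : eqType} (r : seq I) (q : pred I) (F : I -> set T) w :
  (\big[setU/set0]_(i <- r | q i) F i) w <-> exists i, [/\ i \in r, q i & F i w].
Proof.
elim: r => [|x r IH].
  by rewrite big_nil; split => // [[i []]]; rewrite in_nil.
rewrite big_cons; case: ifP => qx; split.
- case => [hx|/IH [i [hi qi hF]]]; first by exists x; rewrite mem_head.
  by exists i; rewrite in_cons hi orbT.
- move=> [i []]; rewrite in_cons => /orP[/eqP -> _ hF|hi qi hF]; first by left.
  by right; apply/IH; exists i.
- by move=> /IH [i [hi qi hF]]; exists i; rewrite in_cons hi orbT.
- move=> [i []]; rewrite in_cons => /orP[/eqP -> | hi qi hF]; first by rewrite qx.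
  by apply/IH; exists i.
Qed.

Lemma FA_seq {d} {T : measurableType d} {R : realType} (mu : {measure set T -> \bar R})
  {I : eqType} (r : seq I) (q : pred I) (F : I -> set T) :
  uniq r -> (forall i, measurable (F i)) ->
  (forall i j, i != j -> F i `&` F j = set0) ->
  mu (\big[setU/set0]_(i <- r | q i) F i) = (\sum_(i <- r | q i) mu (F i))%E.
Proof.
move=> + mF dF; elim: r => [|x r IH] /=; first by rewrite !big_nil measure0.
move=> /andP[xr ur]; rewrite !big_cons; case: ifP => qx; last exact: (IH ur).
rewrite measureU //; first by rewrite -(IH ur).
- by apply: bigsetU_measurable.
apply/seteqP; split => w // [hx /bigU_mem [i [hi qi hF]]].
have hix : x != i by apply: contraNneq xr => ->.
by have : (F x `&` F i) w by []; rewrite dF.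
Qed.

Lemma FA {d} {T : measurableType d} {R : realType} (mu : {measure set T -> \bar R})
  {I : finType} (q : pred I) (F : I -> set T) :
  (forall i, measurable (F i)) ->
  (forall i j, i != j -> F i `&` F j = set0) ->
  mu (\big[setU/set0]_(i | q i) F i) = (\sum_(i | q i) mu (F i))%E.
Proof. by move=> mF dF; apply: FA_seq => //; apply: index_enum_uniq. Qed.

Lemma bigUf_mem {T : Type} {I : finType} (q : pred I) (F : I -> set T) w :
  (\big[setU/set0]_(i | q i) F i) w <-> exists i, q i /\ F i w.
Proof.
rewrite bigU_mem; split; first by move=> [i [_ qi hF]]; exists i.
by move=> [i [qi hF]]; exists i; rewrite mem_index_enum.
Qed.


Lemma cylset_meas {d} {Omega : measurableType d} {N : nat} (X : nat -> Omega -> arlod_input N) :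
  (forall t (x : arlod_input N), measurable (X t @^-1` [set x])) ->
  forall n (x : nat -> arlod_input N), measurable [set w | forall t, (t < n)%N -> X t w = x t].
Proof.
move=> hX n x.
have -> : [set w | forall t, (t < n)%N -> X t w = x t] =
          \bigcap_t [set w | (t < n)%N -> X t w = x t].
  by apply/seteqP; split => w /= H t; [move=> _; exact: H | exact: H].
apply: bigcapT_measurable => t; case: (ltnP t n) => ht.
  have -> : [set w | true -> X t w = x t] = X t @^-1` [set x t].
    by apply/seteqP; split => w /=; [apply | move=> -> ].
  exact: hX.
have -> : [set w | false -> X t w = x t] = setT.
  by apply/seteqP; split => w //= _.
exact: measurableT.
Qed.

Lemma cyl_meas {d} {Omega : measurableType d} {N : nat} (X : nat -> Omega -> arlod_input N)
  (x0 : arlod_input N) :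
  (forall t (x : arlod_input N), measurable (X t @^-1` [set x])) ->
  forall n (h : {ffun 'I_n -> arlod_input N}), measurable [set w | hist X n w = h].
Proof.
move=> hX n h.
have -> : [set w | hist X n w = h] = [set w | forall t, (t < n)%N -> X t w = ext x0 h t].
  by apply/seteqP; split => w /=; rewrite (hist_eqE _ _ _ _ x0).
exact: cylset_meas.
Qed.

Lemma hist_set {T : Type} {N : nat} (X : nat -> T -> arlod_input N) n
  (hp : pred {ffun 'I_n -> arlod_input N}) :
  [set w | hp (hist X n w)] = \big[setU/set0]_(h | hp h) [set w | hist X n w = h].
Proof.
apply/seteqP; split => w /=.
  by move=> H; apply/bigUf_mem; exists (hist X n w).
by move=> /bigUf_mem [h [hh /= ->]].
Qed.

Lemma Mhist {d} {Omega : measurableType d} {N : nat} (X : nat -> Omega -> arlod_input N)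
  (x0 : arlod_input N) :
  (forall t (x : arlod_input N), measurable (X t @^-1` [set x])) ->
  forall n (hp : pred {ffun 'I_n -> arlod_input N}), measurable [set w | hp (hist X n w)].
Proof.
move=> hX n hp; rewrite hist_set; apply: bigsetU_measurable => h _.
exact: cyl_meas.
Qed.

Lemma cyl_disj {T : Type} {N : nat} (X : nat -> T -> arlod_input N) n
  (h h' : {ffun 'I_n -> arlod_input N}) (A B : set T) :
  h != h' -> ([set w | hist X n w = h] `&` A) `&` ([set w | hist X n w = h'] `&` B) = set0.
Proof.
move=> hh; apply/seteqP; split => w //= [[e1 _] [e2 _]].
by move: hh; rewrite -e1 -e2 eqxx.
Qed.

Lemma P_cyl {d} {Omega : measurableType d} {R : realType} (P : probability Omega R)
  {N : nat} (adj : rel 'I_N) (eps : R) (X : nat -> Omega -> arlod_input N) (x0 : arlod_input N) :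
  (forall (n : nat) (x : nat -> arlod_input N),
      P [set w | forall t, (t < n)%N -> X t w = x t]
      = (\prod_(t < n) arlod_input_prob adj eps (x t))%:E) ->
  forall n (h : {ffun 'I_n -> arlod_input N}),
  P [set w | hist X n w = h] = (\prod_(t < n) arlod_input_prob adj eps (h t))%:E.
Proof.
move=> HP n h.
have -> : [set w | hist X n w = h] = [set w | forall t, (t < n)%N -> X t w = ext x0 h t].
  by apply/seteqP; split => w /=; rewrite (hist_eqE _ _ _ _ x0).
by rewrite HP; congr (_%:E); apply: eq_bigr => i _; rewrite ext_ord.
Qed.

Lemma P_hist {d} {Omega : measurableType d} {R : realType} (P : probability Omega R)
  {N : nat} (adj : rel 'I_N) (eps : R) (X : nat -> Omega -> arlod_input N) (x0 : arlod_input N) :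
  (forall t (x : arlod_input N), measurable (X t @^-1` [set x])) ->
  (forall (n : nat) (x : nat -> arlod_input N),
      P [set w | forall t, (t < n)%N -> X t w = x t]
      = (\prod_(t < n) arlod_input_prob adj eps (x t))%:E) ->
  forall n (hp : pred {ffun 'I_n -> arlod_input N}),
  P [set w | hp (hist X n w)] =
    (\sum_(h | hp h) \prod_(t < n) arlod_input_prob adj eps (h t))%:E.
Proof.
move=> hX HP n hp; rewrite hist_set FA.
- by rewrite -sumEFin; apply: eq_bigr => h _; exact: (P_cyl _ _ _ _ x0 HP).
- by move=> h; apply: cyl_meas.
move=> h h' hh; have := cyl_disj X n h h' setT setT hh.
by rewrite !setIT.
Qed.


Definition consO {R : realType} {N : nat} (Q : 'I_N -> bool -> R) (o : bool) : bool :=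
  [forall i, Q i (~~ o) < Q i o].

Lemma consO_update {R : realType} {N : nat} (alpha : R) (Q : 'I_N -> bool -> R) x o :
  0 < alpha < 1 -> bnd Q -> consO Q o -> consO (arlod_update alpha Q x) o.
Proof.
case: x => [[i j] b] /andP[a0 a1] hb /forallP H.
have fav : forall k, favoured Q k = o.
  move=> k; rewrite /favoured; have := H k; case: o {H} => /= h.
    exact: ltW.
  by rewrite leNgt h.
apply/forallP => k /=.
rewrite !fav.
have hk := H k; have /andP[h1 h2] := hb k o; have /andP[h3 h4] := hb k (~~ o).
clear fav H.
case: b; case: o hk h1 h2 h3 h4 => hk h1 h2 h3 h4;
  case: (k == i) => /=; nra.
Qed.

Lemma consO_Q {R : realType} {N : nat} (alpha : R) (Q : 'I_N -> bool -> R) xs o k :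
  0 < alpha < 1 -> bnd Q -> consO Q o -> consO (arlod_Q alpha Q xs k) o.
Proof.
move=> ha hb hc; elim: k => [|k IH] //=.
by apply: consO_update => //; apply: Q_bnd.
Qed.

Lemma consb_Q {R : realType} {N : nat} (alpha : R) (Q : 'I_N -> bool -> R) xs k :
  0 < alpha < 1 -> bnd Q -> consb Q -> consb (arlod_Q alpha Q xs k).
Proof.
move=> ha hb /existsP[] o ho; apply/existsP; exists o.
exact: consO_Q.
Qed.

Lemma P_blk {d} {Omega : measurableType d} {R : realType} (P : probability Omega R)
  {N : nat} (adj : rel 'I_N) (eps : R) (X : nat -> Omega -> arlod_input N) (x0 : arlod_input N) :
  (forall (n : nat) (x : nat -> arlod_input N),
      P [set w | forall t, (t < n)%N -> X t w = x t]
      = (\prod_(t < n) arlod_input_prob adj eps (x t))%:E) ->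
  forall M K (h : {ffun 'I_M -> arlod_input N}) (s : nat -> arlod_input N),
  P ([set w | hist X M w = h] `&` [set w | forall t, (t < K)%N -> X (M + t) w = s t]) =
  (\prod_(t < M) arlod_input_prob adj eps (h t) *
   \prod_(t < K) arlod_input_prob adj eps (s t))%:E.
Proof.
move=> HP M K h s.
pose cat t := if (t < M)%N then ext x0 h t else s (t - M)%N.
have -> : [set w | hist X M w = h] `&` [set w | forall t, (t < K)%N -> X (M + t) w = s t]
        = [set w | forall t, (t < M + K)%N -> X t w = cat t].
  apply/seteqP; split => w /=.
    move=> [/(hist_eqE _ _ _ _ x0) H1 H2] t ht; rewrite /cat.
    case: ifP => htM; first exact: H1.
    have e : (M + (t - M))%N = t by lia.
    by rewrite -{1}e H2 //; lia.
  move=> H; split.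
    apply/(hist_eqE _ _ _ _ x0) => t ht; rewrite H; last by lia.
    by rewrite /cat ht.
  move=> t ht; rewrite H; last by lia.
  rewrite /cat; have -> : (M + t < M)%N = false by lia.
  by rewrite addKn.
rewrite HP big_split_ord /=; congr (_ * _)%:E; apply: eq_bigr => i _; rewrite /cat /=.
  by rewrite ltn_ord ext_ord.
have -> : (M + i < M)%N = false by lia.
by rewrite addKn.
Qed.

Lemma p_ge {R : realType} {N : nat} (adj : rel 'I_N) (eps : R) (x : arlod_input N) :
  0 < eps < 1 -> adj x.1.1 x.1.2 ->
  (N%:R)^-1 * (N%:R)^-1 * (eps * (1 - eps)) <= arlod_input_prob adj eps x.
Proof.
case: x => [[i j] b] /andP[e0 e1] /= hij; rewrite hij.
have hN : (0 < N)%N := leq_ltn_trans (leq0n i) (ltn_ord i).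
have hdeg0 : (0 < #|[set k | adj i k]%SET|)%N by apply/card_gt0P; exists j; rewrite inE.
have hdegN : (#|[set k | adj i k]%SET| <= N)%N.
  by apply: leq_trans (max_card _) _; rewrite card_ord.
have n0 : 0 < (N%:R : R) by rewrite ltr0n.
have d0 : 0 < (#|[set k | adj i k]%SET|%:R : R) by rewrite ltr0n.
have h1 : (N%:R : R)^-1 <= (#|[set k | adj i k]%SET|%:R)^-1.
  by rewrite lef_pV2 ?posrE // ler_nat.
have h2 : eps * (1 - eps) <= (if b then eps else 1 - eps) by case: b; nra.
have h3 : 0 <= (N%:R : R)^-1 by rewrite invr_ge0 ltW.
have h4 : 0 <= eps * (1 - eps) by nra.
apply: ler_pM; [exact: (mulr_ge0 h3 h3) | exact: h4 | | exact: h2].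
by apply: ler_pM; [exact: h3|exact: h3|exact: lexx|exact: h1].
Qed.

Lemma p_ge0 {R : realType} {N : nat} (adj : rel 'I_N) (eps : R) (x : arlod_input N) :
  0 < eps < 1 -> 0 <= arlod_input_prob adj eps x.
Proof.
case: x => [[i j] b] /andP[e0 e1] /=.
apply: mulr_ge0; [apply: mulr_ge0|].
- by rewrite invr_ge0 ler0n.
- by case: ifP => _ //; rewrite invr_ge0 ler0n.
- by case: b; lra.
Qed.


Theorem theorem1 (R : realType) (d : measure_display) (Omega : measurableType d)
  (P : probability Omega R) (N : nat) (adj : rel 'I_N) (alpha eps : R)
  (Q0 : 'I_N -> bool -> R) (X : nat -> Omega -> arlod_input N) :
  (2 <= N)%N ->
  symmetric adj -> irreflexive adj -> (forall i j, connect adj i j) ->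
  0 < alpha < 1 -> 0 < eps < 1 ->
  (forall i o, -1 <= Q0 i o <= 1) ->
  (forall t (x : arlod_input N), measurable (X t @^-1` [set x])) ->
  (forall (n : nat) (x : nat -> arlod_input N),
      P [set w | forall t, (t < n)%N -> X t w = x t]
      = (\prod_(t < n) arlod_input_prob adj eps (x t))%:E) ->
  P [set w | exists t0 : nat, exists o : bool, forall t : nat, (t0 <= t)%N ->
       forall i : 'I_N,
         arlod_Q alpha Q0 (fun s => X s w) t i (~~ o)
         < arlod_Q alpha Q0 (fun s => X s w) t i o] = 1%E.
Proof.
move=> hN sym irr con ha he hQ0 hX HP.
have N0 : (0 < N)%N by lia.
pose i0 : 'I_N := Ordinal N0.
have [j0 hj0] := nbr adj con hN i0.
pose x0 : arlod_input N := (i0, j0, false).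
have hx0 : adj x0.1.1 x0.1.2 by [].
have hb0 : bnd Q0 by [].
have [m hm] : exists m, 2 * (1 - alpha) ^+ m < 1.
  have [m hm] : exists m, (1 - alpha) ^+ m < 1 / 2.
    by apply: geom; [apply/andP; split|]; lra.
  by exists m; lra.
pose K := (N * (m + m))%N.
have Hc : forall Q : 'I_N -> bool -> R, exists s : nat -> arlod_input N,
    bnd Q -> (forall t, (t < K)%N -> adj (s t).1.1 (s t).1.2)
             /\ consb (arlod_Q alpha Q s K).
  move=> Q; case: (pselect (bnd Q)) => hbQ.
    have [s hs] := Reach_cons adj alpha m x0 Q hx0 ha hm irr con hN hbQ.
    by exists s.
  by exists (fun _ => x0).
have [g hg] := boolp.choice Hc.
pose c := (N%:R : R)^-1 * (N%:R)^-1 * (eps * (1 - eps)).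
pose a := 1 - c ^+ K.
have c0 : 0 < c.
  have n0 : 0 < (N%:R : R) by rewrite ltr0n.
  have : 0 < eps * (1 - eps) by nra.
  by move=> h; rewrite /c; apply: mulr_gt0 => //; apply: mulr_gt0; rewrite invr_gt0.
have c1 : c <= 1.
  have n1 : (N%:R : R)^-1 <= 1 by rewrite invr_le1 ?ler1n ?unitfE ?pnatr_eq0 -?lt0n ?ltr0n.
  have n0 : 0 <= (N%:R : R)^-1 by rewrite invr_ge0 ler0n.
  have : eps * (1 - eps) <= 1 by nra.
  rewrite /c => h; nra.
have a01 : 0 <= a < 1.
  have : 0 < c ^+ K by apply: exprn_gt0.
  have : c ^+ K <= 1 by apply: exprn_ile1; [exact: ltW|].
  by rewrite /a => h1 h2; apply/andP; split; lra.
pose p := arlod_input_prob adj eps.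
pose st M (h : {ffun 'I_M -> arlod_input N}) := arlod_Q alpha Q0 (ext x0 h) M.
have Qw_st : forall M w, arlod_Q alpha Q0 (fun s => X s w) M = st M (hist X M w).
  move=> M w; apply: Q_ext => s hs.
  by rewrite -((hist_eqE X M w (hist X M w) x0).1 erefl s hs).
pose NC M := [set w | ~~ consb (arlod_Q alpha Q0 (fun s => X s w) M)].
have NCE : forall M, NC M = [set w | ~~ consb (st M (hist X M w))].
  by move=> M; rewrite /NC; apply/seteqP; split => w /=; rewrite Qw_st.
have mNC : forall M, measurable (NC M).
  move=> M; rewrite NCE.
  exact: (Mhist X x0 hX M (fun h => ~~ consb (st M h))).
have PNC : forall M, P (NC M) = (\sum_(h | ~~ consb (st M h)) \prod_(t < M) p (h t))%:E.
  move=> M; rewrite NCE.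
  exact: (P_hist P adj eps X x0 hX HP M (fun h => ~~ consb (st M h))).
pose Blk M (s : nat -> arlod_input N) := [set w | forall t, (t < K)%N -> X (M + t)%N w = s t].
have mBlk : forall M s, measurable (Blk M s).
  move=> M s; apply: (cylset_meas (fun t => X (M + t))) => t x; exact: hX.
pose F M (h : {ffun 'I_M -> arlod_input N}) :=
  [set w | hist X M w = h] `&` ~` Blk M (g (st M h)).
have mF : forall M h, measurable (F M h).
  move=> M h; apply: measurableI; first exact: cyl_meas.
  by apply: measurableC.
have term : forall M h, ~~ consb (st M h) ->
    (P (F M h) <= (a * \prod_(t < M) p (h t))%:E)%E.
  move=> M h _.
  have hcyl : P [set w | hist X M w = h] = (\prod_(t < M) p (h t))%:E.
    exact: (P_cyl P adj eps X x0 HP).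
  have hblk : P ([set w | hist X M w = h] `&` Blk M (g (st M h))) =
      (\prod_(t < M) p (h t) * \prod_(t < K) p (g (st M h) t))%:E.
    exact: (P_blk P adj eps X x0 HP).
  have hD : P (F M h) = (P [set w | hist X M w = h] -
                        P ([set w | hist X M w = h] `&` Blk M (g (st M h))))%E.
    rewrite /F -setDE; apply: measureD; first exact: cyl_meas.
      exact: mBlk.
    by change (P [set w | hist X M w = h] < +oo)%E; rewrite hcyl ltey.
  rewrite hD hcyl hblk -EFinB lee_fin.
  have bst : bnd (st M h) by apply: Q_bnd.
  have [hv _] := hg _ bst.
  have ph0 : 0 <= \prod_(t < M) p (h t).
    by apply: prodr_ge0 => t _; apply: p_ge0.
  have pg : c ^+ K <= \prod_(t < K) p (g (st M h) t).
    have -> : c ^+ K = \prod_(t < K) c by rewrite prodr_const card_ord.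
    apply: ler_prod => t _.
    apply/andP; split; first exact: ltW.
    exact: (p_ge adj eps (g (st M h) t) he (hv t (ltn_ord t))).
  rewrite /a; nra.
have step : forall M, (P (NC (M + K)%N) <=
    (a * \sum_(h | ~~ consb (st M h)) \prod_(t < M) p (h t))%:E)%E.
  move=> M.
  have sub : NC (M + K)%N `<=` \big[setU/set0]_(h | ~~ consb (st M h)) F M h.
    move=> w hw; rewrite /NC /= in hw; apply/bigUf_mem; exists (hist X M w).
    have bst : bnd (st M (hist X M w)) by apply: Q_bnd.
    have e1 : arlod_Q alpha Q0 (fun s => X s w) (M + K)%N =
              arlod_Q alpha (st M (hist X M w)) (fun j => X (M + j)%N w) K.
      by rewrite Q_shift Qw_st.
    split.
      apply: contra hw => hc; rewrite e1; exact: consb_Q.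
    split => // hB; move: hw; rewrite e1.
    rewrite (Q_ext _ _ _ (g (st M (hist X M w)))); last exact: hB.
    by rewrite (hg _ bst).2.
  have mU : measurable (\big[setU/set0]_(h | ~~ consb (st M h)) F M h).
    by apply: bigsetU_measurable => h _; apply: mF.
  have le1 : (P (NC (M + K)%N) <= P (\big[setU/set0]_(h | ~~ consb (st M h)) F M h))%E.
    by apply: le_measure => //; rewrite inE.
  have eU : P (\big[setU/set0]_(h | ~~ consb (st M h)) F M h) =
            (\sum_(h | ~~ consb (st M h)) P (F M h))%E.
    apply: FA => // h h' hh; exact: cyl_disj.
  apply: le_trans le1 _; rewrite eU mulr_sumr -sumEFin.
  by apply: lee_sum => h hh; apply: term.
have bound : forall n, (P (NC (n * K)%N) <= (a ^+ n)%:E)%E.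
  elim => [|n IH].
    rewrite mul0n expr0; exact: probability_le1.
  rewrite mulSnr; apply: le_trans (step _) _.
  rewrite lee_fin; move: IH; rewrite PNC lee_fin => IH.
  rewrite exprS; apply: ler_wpM2l => //; by case/andP: a01.
set T := [set w | exists t0 : nat, exists o : bool, forall t : nat, (t0 <= t)%N ->
       forall i : 'I_N,
         arlod_Q alpha Q0 (fun s => X s w) t i (~~ o)
         < arlod_Q alpha Q0 (fun s => X s w) t i o].
have Tmeas : measurable T.
  have -> : T = \bigcup_t0 ((\bigcap_t [set w | (t0 <= t)%N ==> consO (st t (hist X t w)) true])
       `|` (\bigcap_t [set w | (t0 <= t)%N ==> consO (st t (hist X t w)) false])).
    rewrite /T; apply/seteqP; split => w /=.
      move=> [t0 [bo H]]; exists t0 => //.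
      case: bo H => H; [left|right] => t _; apply/implyP => ht; rewrite -Qw_st;
        apply/forallP => i; exact: H.
    move=> [t0 _ [H|H]]; exists t0; [exists true | exists false] => t ht i;
      by have := H t I; rewrite ht /= -Qw_st => /forallP; apply.
  apply: bigcupT_measurable => t0; apply: measurableU; apply: bigcapT_measurable => t.
    exact: (Mhist X x0 hX t (fun h => (t0 <= t)%N ==> consO (st t h) true)).
  exact: (Mhist X x0 hX t (fun h => (t0 <= t)%N ==> consO (st t h) false)).
have notT : forall n, ~` T `<=` NC (n * K)%N.
  move=> n w hw; rewrite /NC /=; apply/negP => hc; apply: hw.
  have [bo ho] := existsP hc.
  exists (n * K)%N, bo => t ht i.
  have hb1 : bnd (arlod_Q alpha Q0 (fun s => X s w) (n * K)%N) by apply: Q_bnd.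
  have := consO_Q alpha _ (fun j => X ((n * K) + j)%N w) bo (t - n * K)%N ha hb1 ho.
  by rewrite -Q_shift subnKC // => /forallP; apply.
have P0 : P (~` T) = 0%E.
  apply/eqP; rewrite eq_le measure_ge0 andbT; apply/lee_addgt0Pr => e e0.
  rewrite add0e; have [n hn] := geom _ _ a01 e0.
  have mT : measurable (~` T) by apply: measurableC.
  have l1 : (P (~` T) <= P (NC (n * K)%N))%E by apply: le_measure => //; rewrite inE.
  apply: le_trans l1 _; apply: le_trans (bound n) _.
  by rewrite lee_fin ltW.
have := probability_setC P (measurableC Tmeas).
rewrite setCK => e.
change (P T = 1%E); rewrite e.
change ((1 - P (~` T))%E = 1%E); rewrite P0.
by rewrite sube0.
Qed.
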